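(* Let $T$ be a local, translation-invariant stochastic matrix on $\mathbb{Z}\times\{1,\dots,D\}$ with $\det X(k)\ne0$ for all $k\in[-\pi,\pi]$. Suppose there is a real orthogonal $D\times D$ matrix $M$ such that $$\sum_{b,c}M_{a,b}\,T_{j-l,b;j,c}\,M_{d,c}=T_{j+l,a;j,d}\quad\text{for all } l\in\mathbb{Z},\ j,\ a,\ d$$ (spatial inversion symmetry; equivalently $MX(-k)M^{\top}=X(k)$). Then $w(T,0)=0$.
   Context: States are pairs $(j,a)$, $j\in\mathbb{Z}$, $a\in\{1,\dots,D\}$. A stochastic matrix is a real matrix $T=(T_{i,a;j,b})$ with $T_{i,a;j,b}\ge0$ and $\sum_{i,a}T_{i,a;j,b}=1$ for all $(j,b)$. It is local if there are $C,\ell>0$ with $T_{i,a;j,b}\le Ce^{-|i-j|/\ell}$ for all sufficiently large $|i-j|$, and translation invariant if $T_{i+1,a;j+1,b}=T_{i,a;j,b}$. The Bloch matrix is $X(k)$ with $X_{a,b}(k)=\sum_{l\in\mathbb{Z}}T_{j+l,a;j,b}e^{-ikl}$, $k\in[-\pi,\pi]$, and $w(T,0)=\int_{-\pi}^{\pi}\frac{dk}{2\pi i}\partial_k\log\det X(k)\in\mathbb{Z}$. *)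

(* Defs.v *)
From mathcomp Require Import all_boot all_order all_algebra.
From mathcomp Require Import complex.
From mathcomp Require Import all_classical all_reals all_analysis.
Set Implicit Arguments. Unset Strict Implicit. Unset Printing Implicit Defensive.
Import Order.TTheory GRing.Theory Num.Theory numFieldNormedType.Exports.
Local Open Scope ring_scope.
Local Open Scope classical_set_scope.

Section Defs.
Variable R : realType.

(* A (possibly non-translation-invariant) real matrix indexed by
   Z x {1..D} : T i a j b stands for T_{i,a;j,b}.  'I_D encodes {1,..,D}. *)
Definition zmat (D : nat) := int -> 'I_D -> int -> 'I_D -> R.

Definition zpartial (f : int -> R) (N : nat) : R :=
  \sum_(i < N.+1) f (i%:Z) + \sum_(i < N) f (- (i.+1)%:Z).

Definition zsum (f : int -> R) : R := limn (zpartial f).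

Definition stochastic D (T : zmat D) : Prop :=
  (forall i a j b, 0 <= T i a j b) /\
  (forall j b, zpartial (fun i => \sum_(a < D) T i a j b) @ \oo --> (1 : R)).

Definition local D (T : zmat D) : Prop :=
  exists C : R, exists l : R, 0 < C /\ 0 < l /\
  exists N : nat, forall i a j b, (N <= absz (i - j))%N ->
    T i a j b <= C * expR (- ((absz (i - j))%:R) / l).

Definition transl_inv D (T : zmat D) : Prop :=
  forall i a j b, T (i + 1) a (j + 1) b = T i a j b.

(* Bloch matrix X_{a,b}(k) = sum_l T_{j+l,a;j,b} e^{-ikl}  (with j = 0),
   e^{-ikl} = cos(kl) - i sin(kl). *)
Definition bloch D (T : zmat D) (k : R) : 'M[R[i]]_D :=
  \matrix_(a, b)
    (zsum (fun l => T l a 0 b * cos (k * l%:~R))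
     +i* (- zsum (fun l => T l a 0 b * sin (k * l%:~R))))%C.

Definition detX D (T : zmat D) (k : R) : R[i] := \det (bloch T k).

(* w(T,0) = int_{-pi}^{pi} dk/(2 pi i) d_k log det X(k)
          = (1/(2 pi i)) int_{-pi}^{pi} f'(k)/f(k) dk,  f = det X = u + i v.
   f'/f = (u u' + v v')/|f|^2 + i (u v' - v u')/|f|^2, hence
   w = (1/2pi) int (u v' - v u')/|f|^2  +  i * ( -(1/2pi) int (u u' + v v')/|f|^2 ). *)
Definition winding0 D (T : zmat D) : R[i] :=
  let u := fun k => complex.Re (detX T k) in
  let v := fun k => complex.Im (detX T k) in
  let n2 := fun k => u k ^+ 2 + v k ^+ 2 in
  let I1 := Rintegral (@lebesgue_measure R) `[(- pi)%R, pi]%classic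
              (fun k => (u k * (derive1 v k) - v k * (derive1 u k)) / n2 k) in
  let I2 := Rintegral (@lebesgue_measure R) `[(- pi)%R, pi]%classic
              (fun k => (u k * (derive1 u k) + v k * (derive1 v k)) / n2 k) in
  ((I1 / (2 * pi)) +i* (- (I2 / (2 * pi))))%C.

End Defs.

(* Main.v *)
Require Import Defs.
From HB Require Import structures.
From mathcomp Require Import all_boot all_order all_algebra.
From mathcomp Require Import complex.
From mathcomp Require Import all_classical all_reals all_analysis.
From mathcomp Require Import ring lra.
Set Implicit Arguments. Unset Strict Implicit. Unset Printing Implicit Defensive.
Import Order.TTheory GRing.Theory Num.Theory numFieldNormedType.Exports.
Local Open Scope ring_scope.
Local Open Scope classical_set_scope.
Section A.
Context {R : realType}.
Notation mu := (@lebesgue_measure R).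
Local Open Scope ereal_scope.

Definition nmu (A : set (measurableTypeR R)) : \bar R := mu (-%R @^-1` A).

Let mN : measurable_fun [set: measurableTypeR R] (-%R : R -> R).
Proof. exact: measurable_realfun.oppr_measurable. Qed.

Let nmu0 : nmu set0 = 0.
Proof. by rewrite /nmu preimage_set0 measure0. Qed.

Let nmu_ge0 A : 0 <= nmu A.
Proof. exact: measure_ge0. Qed.

Let nmu_sigma_additive : semi_sigma_additive nmu.
Proof.
move=> F mF tF mUF; rewrite /nmu preimage_bigcup.
apply: measure_semi_sigma_additive.
- by move=> n; rewrite -[X in measurable X]setTI; apply: mN => //; exact: mF.
- apply/trivIsetP => /= i j _ _ ij; rewrite -preimage_setI.
  by move/trivIsetP : tF => /(_ i j I I ij) ->; rewrite preimage_set0.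
- by rewrite -preimage_bigcup -[X in measurable X]setTI; apply: mN.
Qed.

HB.instance Definition _ := isMeasure.Build _ _ _ nmu nmu0 nmu_ge0 nmu_sigma_additive.

Lemma leb_oppr (A : set R) : measurable A -> mu (-%R @^-1` A) = mu A.
Proof.
move=> mA.
have := @lebesgue_measure_unique R nmu _ A mA.
rewrite /nmu => ->; first by [].
move=> _ [[a b] _ <-] /=; rewrite /nmu.
have -> : (-%R @^-1` `]a, b]) = `[(- b)%R, (- a)%R[%classic.
  apply/seteqP; split => x /=; rewrite !in_itv /= => /andP[h1 h2].
    by rewrite lerNl h2 ltrNr h1.
  by rewrite ltrNr h2 lerNl h1.
rewrite !lebesgue_measure_itv /= !lte_fin ltrN2.
by case: ifP => // _; rewrite opprK addeC.
Qed.

Import HBNNSimple.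
Section hN.
Variable h : {nnsfun (measurableTypeR R) >-> R}.
Definition hN : measurableTypeR R -> R := h \o (-%R).
Let hN_meas : measurable_fun setT hN.
Proof. exact: measurableT_comp. Qed.
HB.instance Definition _ := isMeasurableFun.Build _ _ _ _ hN hN_meas.
Let hN_fin : finite_set (range hN).
Proof.
suff -> : range hN = range h by [].
apply/seteqP; split => _ [x _ <-]; first by exists (- x)%R.
by exists (- x)%R => //; rewrite /hN /= opprK.
Qed.
HB.instance Definition _ := FiniteImage.Build _ _ hN hN_fin.
Let hN_ge0 x : (0 <= hN x)%R.
Proof. exact: fun_ge0. Qed.
HB.instance Definition _ := isNonNegFun.Build _ _ hN hN_ge0.
Definition hNn : {nnsfun (measurableTypeR R) >-> R} := hN.

Lemma sintegral_hN : sintegral mu hNn = sintegral mu h.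
Proof.
rewrite !sintegralET; apply: eq_fsbigr => x _; congr (_ * _).
by rewrite -(leb_oppr (measurable_sfunP h (measurable_set1 x))).
Qed.
End hN.

Lemma ge0_integral_reflect (G : measurableTypeR R -> \bar R) :
  (forall x, 0 <= G x) -> \int[mu]_x G (- x)%R = \int[mu]_x G x.
Proof.
suff H : forall G : measurableTypeR R -> \bar R, (forall x, 0 <= G x) ->
    \int[mu]_x G (- x)%R <= \int[mu]_x G x.
  move=> G0; apply/eqP; rewrite eq_le H //=.
  have := H (fun x => G (- x)%R) (fun x => G0 _).
  by under eq_integral do rewrite opprK.
move=> {}G G0.
rewrite !ge0_integralTE //.
apply: ge_ereal_sup => _ [h /= hle <-].
apply: ereal_sup_ubound => /=; exists (hNn h); last exact: sintegral_hN.
by move=> x /=; rewrite /hN /=; have := hle (- x)%R; rewrite opprK.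
Qed.

Lemma Rintegral_odd (a : R) (f : R -> R) : (forall x, f (- x) = - f x)%R ->
  Rintegral mu `[(- a)%R, a] f = 0%R.
Proof.
move=> fodd; rewrite /Rintegral integralE.
set D := `[(- a)%R, a]%classic.
have DN x : ((- x)%R \in D) = (x \in D).
  rewrite /D; apply/idP/idP => /set_mem /=; rewrite !in_itv /= => h; apply/mem_set => /=; rewrite in_itv /=; move: h; rewrite lerNr opprK lerNl andbC //.
set F := (fun x : measurableTypeR R => (f x)%:E).
set P := \int[mu]_(x in D) F^\+ x.
set N := \int[mu]_(x in D) F^\- x.
have -> : N = P.
  rewrite /N /P.
  rewrite (@integral_mkcond _ (measurableTypeR R) R mu D (F^\-)).
  rewrite (@integral_mkcond _ (measurableTypeR R) R mu D (F^\+)).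
  rewrite -(@ge0_integral_reflect (F^\+ \_ D)); last first.
    by move=> x; rewrite /patch; case: ifP => // _; exact: funepos_ge0.
  apply: eq_integral => x _; rewrite /patch DN; case: ifP => // _.
  by rewrite funeposE funenegE /F /= fodd EFinN.
have P0 : 0 <= P by apply: integral_ge0 => x _; exact: funepos_ge0.
by case: P P0 => [r| |] //= _; rewrite subrr.
Qed.
End A.

Section B.
Context {R : realType}.

Lemma oppr_dnbhs0 : ((-%R : R -> R) @ (0 : R)^') --> (0 : R)^'.
Proof.
move=> A [e /= e0 eA]; exists e => //= y /= ye y0; apply: eA => /=.
  by move: ye; rewrite /ball /= !sub0r normrN opprK.
by rewrite oppr_eq0.
Qed.

Lemma lim_reflN (g : R -> R) :
  lim ((fun h => - g (- h)) @ (0 : R)^') = - lim (g @ (0 : R)^').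
Proof.
have key : forall g : R -> R, forall l, g @ (0:R)^' --> l ->
    (fun h => - g (- h)) @ (0 : R)^' --> - l.
  move=> g0 l gl; apply: cvgN.
  exact: (cvg_comp _ _ oppr_dnbhs0 gl).
case: (pselect (cvg (g @ (0:R)^'))) => [/cvg_ex[l gl]|ng].
  by rewrite (cvg_lim _ gl) // (cvg_lim _ (key _ _ gl)).
have ng' : ~ cvg ((fun h => - g (- h)) @ (0 : R)^').
  move=> /cvg_ex[l gl]; apply: ng; apply/cvg_ex; exists (- l).
  have := key _ _ gl.
  have -> : (fun h => - ((fun h => - g (- h)) (- h))) = g.
    by apply/funext => h /=; rewrite !opprK.
  by [].
rewrite (dvgP ng) (dvgP ng').
have -> : (point : R) = 0 by [].
by rewrite oppr0.
Qed.

Lemma derive1_even (u : R -> R) : (forall x, u (- x) = u x) ->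
  forall x, derive1 u (- x) = - derive1 u x.
Proof.
move=> ue x; rewrite /derive1.
rewrite -(lim_reflN (fun h => h^-1 *: (u (h + x) - u x))).
congr lim.
suff -> : (fun h => h^-1 *: (u (h - x) - u (- x))) =
  (fun h => - ((- h)^-1 *: (u (- h + x) - u x))) by [].
apply/funext => h.
rewrite -[h - x]opprK opprB ue ue invrN scaleNr opprK [- h + x]addrC.
by [].
Qed.
End B.

Section C.
Context {R : realType}.

Lemma zpartialS (f : int -> R) N :
  zpartial f N.+1 = zpartial f N + (f (N.+1)%:Z + f (- (N.+1)%:Z)).
Proof.
rewrite /zpartial big_ord_recr /= [\sum_(i < N.+1) f (- _)]big_ord_recr /=.
by ring.
Qed.

Lemma zpartial_refl (f : int -> R) N : zpartial (fun l => f (- l)) N = zpartial f N.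
Proof.
elim: N => [|N IH]; first by rewrite /zpartial !big_ord1 !big_ord0 oppr0.
by rewrite !zpartialS IH opprK; congr (_ + _); exact: addrC.
Qed.

Lemma zsum_refl (f : int -> R) : zsum (fun l => f (- l)) = zsum f.
Proof.
rewrite /zsum; have -> : zpartial (fun l => f (- l)) = zpartial f.
  by apply/funext => N; exact: zpartial_refl.
by [].
Qed.

Definition hz (f : int -> R) (n : nat) : R :=
  if n is n'.+1 then f (n'.+1)%:Z + f (- (n'.+1)%:Z) else f 0.

Lemma zpartial_series (f : int -> R) N : zpartial f N = series (hz f) N.+1.
Proof.
elim: N => [|N IH].
  by rewrite /zpartial /series /= big_nat1 big_ord1 big_ord0 addr0.
by rewrite zpartialS IH /series /= [in RHS]big_nat_recr.
Qed.

Lemma cvg_zpartial_series (f : int -> R) :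
  cvgn (zpartial f) <-> cvgn (series (hz f)).
Proof.
have -> : zpartial f = (fun N => series (hz f) N.+1).
  by apply/funext => N; exact: zpartial_series.
split => /cvg_ex[l H]; apply/cvg_ex; exists l.
  by rewrite -cvg_shiftS.
by rewrite cvg_shiftS.
Qed.


Lemma cvg_zpartial_dom (t S phi : int -> R) : (forall l, 0 <= t l) ->
  (forall l, t l <= S l) -> (forall l, `|phi l| <= 1) ->
  cvgn (zpartial S) -> cvgn (zpartial (fun l => t l * phi l)).
Proof.
move=> t0 tS phi1; rewrite !cvg_zpartial_series => HS.
have key l : `|t l * phi l| <= S l.
  rewrite normrM ger0_norm //; apply: le_trans (tS l).
  by rewrite ler_piMr.
have S0 l : 0 <= S l by apply: le_trans (t0 l) (tS l).
apply: normed_cvg; apply: (series_le_cvg _ _ _ HS).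
- by move=> n; rewrite /= normr_ge0.
- by case=> [|n] /=; rewrite ?addr_ge0.
- case=> [|n] /=; first exact: key.
  by apply: le_trans (ler_normD _ _) _; apply: lerD.
Qed.

Lemma cvg_big_seq (J : Type) (r : seq J) (f : J -> nat -> R) (l : J -> R) :
  (forall j, f j @ \oo --> l j) ->
  (fun n => \sum_(j <- r) f j n) @ \oo --> \sum_(j <- r) l j.
Proof.
move=> fl; elim: r => [|j r IH].
  rewrite big_nil; have -> : (fun n => \sum_(j <- [::]) f j n) = (fun=> 0).
    by apply/funext => n; rewrite big_nil.
  exact: cvg_cst.
rewrite big_cons; have -> : (fun n => \sum_(j0 <- j :: r) f j0 n) =
   (f j + (fun n => \sum_(j0 <- r) f j0 n)).
  by apply/funext => n; rewrite big_cons.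
exact: cvgD.
Qed.


Lemma zpartial_big2 (n : nat) (F : 'I_n -> 'I_n -> int -> R) N :
  zpartial (fun l => \sum_(b < n) \sum_(c < n) F b c l) N =
  \sum_(b < n) \sum_(c < n) zpartial (F b c) N.
Proof.
rewrite /zpartial.
rewrite [\sum_(i < N.+1) _]exchange_big [\sum_(i < N) _]exchange_big -big_split /=.
apply: eq_bigr => b _.
rewrite [\sum_(i < N.+1) _]exchange_big [\sum_(i < N) _]exchange_big -big_split /=.
by [].
Qed.

Lemma zsum_lin2 (n : nat) (K : 'I_n -> 'I_n -> R) (t : 'I_n -> 'I_n -> int -> R) :
  (forall b c, cvgn (zpartial (t b c))) ->
  zsum (fun l => \sum_(b < n) \sum_(c < n) K b c * t b c l) =
  \sum_(b < n) \sum_(c < n) K b c * zsum (t b c).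
Proof.
move=> ht; rewrite /zsum.
have -> : zpartial (fun l => \sum_(b < n) \sum_(c < n) K b c * t b c l) =
   (fun N => \sum_(b < n) \sum_(c < n) K b c * zpartial (t b c) N).
  apply/funext => N; rewrite zpartial_big2.
  apply: eq_bigr => b _; apply: eq_bigr => c _.
  by rewrite /zpartial mulrDr !mulr_sumr.
apply: cvg_lim => //.
apply: cvg_big_seq => b; apply: cvg_big_seq => c.
by apply: cvgM; [exact: cvg_cst | exact: ht].
Qed.


Lemma bloch_real_sym (D : nat) (T : zmat R D) (M : 'M[R]_D) (psi : R -> R) (k : R) :
  stochastic T ->
  (forall (l j : int) (a d : 'I_D),
      \sum_(b < D) \sum_(c < D) M a b * T (j - l) b j c * M d c = T (j + l) a j d) ->
  (forall x, `|psi x| <= 1) ->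
  forall a d, zsum (fun l => T l a 0 d * psi (k * l%:~R)) =
  \sum_(b < D) \sum_(c < D) M a b * zsum (fun l => T l b 0 c * psi ((- k) * l%:~R)) * M d c.
Proof.
move=> [T0 Tst] hyp psi1 a d.
have conv b c : cvgn (zpartial (fun l => T l b 0 c * psi ((- k) * l%:~R))).
  apply: (@cvg_zpartial_dom _ (fun i => \sum_(a0 < D) T i a0 0 c)).
  - by move=> l; exact: T0.
  - move=> l; rewrite (bigD1 b) //= lerDl; apply: sumr_ge0 => i _; exact: T0.
  - by move=> l; exact: psi1.
  - by apply/cvg_ex; exists 1; exact: Tst.
rewrite -zsum_refl.
have -> : (fun l => T (- l) a 0 d * psi (k * (- l)%:~R)) =
   (fun l => \sum_(b < D) \sum_(c < D) (M a b * M d c) *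
       (T l b 0 c * psi ((- k) * l%:~R))).
  apply/funext => l.
  have := hyp (- l) 0 a d; rewrite sub0r add0r opprK => <-.
  rewrite mulr_suml; apply: eq_bigr => b _; rewrite mulr_suml; apply: eq_bigr => c _.
  rewrite rmorphN /= mulrN mulNr; ring.
rewrite zsum_lin2 //.
apply: eq_bigr => b _; apply: eq_bigr => c _; ring.
Qed.


Lemma sum_cplx (I : Type) (r : seq I) (F G : I -> R) :
  \sum_(i <- r) (F i +i* G i)%C = ((\sum_(i <- r) F i) +i* (\sum_(i <- r) G i))%C.
Proof.
elim: r => [|i r IH]; first by rewrite !big_nil.
by rewrite !big_cons IH.
Qed.

Lemma cplx_mul3 (p q x y : R) :
  ((p%:C * (x +i* y)) * q%:C = (p * x * q) +i* (p * y * q))%C.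
Proof. by congr (_ +i* _)%C; simpl; ring. Qed.

Lemma bloch_sym (D : nat) (T : zmat R D) (M : 'M[R]_D) (k : R) :
  stochastic T ->
  (forall (l j : int) (a d : 'I_D),
      \sum_(b < D) \sum_(c < D) M a b * T (j - l) b j c * M d c = T (j + l) a j d) ->
  bloch T k = map_mx (real_complex R) M *m bloch T (- k) *m (map_mx (real_complex R) M)^T.
Proof.
move=> st hyp; apply/matrixP => a d; rewrite !mxE.
under eq_bigr do rewrite !mxE mulr_suml.
rewrite exchange_big /=.
under eq_bigr do under eq_bigr do rewrite !mxE cplx_mul3.
under eq_bigr do rewrite sum_cplx.
rewrite sum_cplx.
rewrite (bloch_real_sym (psi:=cos) k st hyp) ?(bloch_real_sym (psi:=sin) k st hyp); last 2 first.
- by move=> x; first [exact: cos_max | exact: sin_max].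
- by move=> x; first [exact: cos_max | exact: sin_max].
congr (_ +i* _)%C.
rewrite -sumrN; apply: eq_bigr => b _; rewrite -sumrN; apply: eq_bigr => c _.
by rewrite mulrN mulNr.
Qed.

End C.


Section D.
Context {R : realType}.

Lemma detX_even (D : nat) (T : zmat R D) (M : 'M[R]_D) (k : R) :
  stochastic T ->
  (forall (l j : int) (a d : 'I_D),
      \sum_(b < D) \sum_(c < D) M a b * T (j - l) b j c * M d c = T (j + l) a j d) ->
  M *m M^T = 1%:M ->
  detX T (- k) = detX T k.
Proof.
move=> st hyp MM; rewrite /detX (bloch_sym k st hyp) !det_mulmx det_tr !det_map_mx.
rewrite mulrC mulrA -rmorphM.
have -> : \det M * \det M = 1 by rewrite -{2}det_tr -det_mulmx MM det1.
by rewrite rmorph1 mul1r.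
Qed.
End D.

Unset Implicit Arguments.
Set Strict Implicit.
Local Close Scope classical_set_scope.

Theorem mainTheorem7 (R : realType) (D : nat) (T : zmat R D) (M : 'M[R]_D) :
  stochastic T -> local T -> transl_inv T ->
  (forall k : R, - pi <= k <= pi -> detX T k != 0) ->
  M *m M^T = 1%:M ->
  (forall (l j : int) (a d : 'I_D),
      \sum_(b < D) \sum_(c < D) M a b * T (j - l) b j c * M d c = T (j + l) a j d) ->
  winding0 T = 0.
Proof.
move=> st _ _ _ MM hyp.
rewrite /winding0 /=.
set u := fun k => complex.Re (detX T k).
set v := fun k => complex.Im (detX T k).
have ue x : u (- x) = u x by rewrite /u (detX_even x st hyp MM).
have ve x : v (- x) = v x by rewrite /v (detX_even x st hyp MM).
have du := derive1_even ue.
have dv := derive1_even ve.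
rewrite !Rintegral_odd; last 2 first.
- by move=> x; rewrite (detX_even x st hyp MM) du dv; ring.
- by move=> x; rewrite (detX_even x st hyp MM) du dv; ring.
by rewrite !mul0r oppr0.
Qed.
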